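(* Let $\langle S,L,\tau,\ell\rangle$ be a labelled Markov chain, $R$ a bisimulation with $S^2_\Delta\subseteq R\subseteq\,\sim$, and $P\in\mathcal{P}$ a maximal $R$-support policy. Then $\mathrm{Filter}(R)=\{(s,t)\in R\mid$ there is a path from $(s,t)$ to $S^2_\Delta$ in $\langle S\times S,P\rangle\}$.
   Context: Labelled Markov chain: finite $S$, finite $L$, $\tau:S\to\mathcal{D}(S)$, $\ell:S\to L$. $\Omega(\mu,\nu)$ = couplings. A bisimulation is an equivalence relation $R$ such that for $(s,t)\in R$, $\ell(s)=\ell(t)$ and some $\omega\in\Omega(\tau(s),\tau(t))$ has support in $R$; $\sim$ is bisimilarity. $S^2_\Delta=\{(s,s)\}$, $S^2_1=\{(s,t)\mid\ell(s)\ne\ell(t)\}$, $S^2_{0?}=(S\times S)\setminus(S^2_\Delta\cup S^2_1)$. $\mathcal{P}$ = policies $P:S\times S\to\mathcal{D}(S\times S)$ with $P(s,t)\in\Omega(\tau(s),\tau(t))$ for $(s,t)\notin S^2_1$ and $P(s,t)$ the point mass at $(s,t)$ for $(s,t)\in S^2_1$; a path in $\langle S\times S,P\rangle$ is a sequence of pairs with positive transition probabilities between consecutive ones. $P$ is a maximal $R$-support policy if $\mathrm{support}(P(s,t))=(\mathrm{support}(\tau(s))\times\mathrm{support}(\tau(t)))\cap R$ for all $(s,t)\in R\cap S^2_{0?}$. $R$ supports a path $(u_1,v_1)\dots(u_n,v_n)$ if $(u_i,v_i)\in R$ and $\mathrm{support}(P(u_i,v_i))\subseteq R$ for all $i$.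 $\mathrm{Filter}(R)=\{(s,t)\in R\mid\exists P'\in\mathcal{P}$ such that $R$ supports a path from $(s,t)$ to $S^2_\Delta$ in $\langle S\times S,P'\rangle\}$. *)

(* Defs.v *)
From HB Require Import structures.
From mathcomp Require Import all_boot all_order all_algebra.
Set Implicit Arguments. Unset Strict Implicit. Unset Printing Implicit Defensive.
Import Order.TTheory GRing.Theory Num.Theory.
Local Open Scope ring_scope.

Section LMC.
Variable K : realFieldType.

Definition is_dist (T : finType) (mu : {ffun T -> K}) : Prop :=
  (forall x, 0 <= mu x) /\ \sum_(x : T) mu x = 1.

Definition support (T : finType) (mu : {ffun T -> K}) : {set T} :=
  [set x | mu x != 0].

Definition point_mass (T : finType) (a : T) : {ffun T -> K} :=
  [ffun x => if x == a then 1 else 0].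

Variables (S L : finType).

Definition coupling (mu nu : {ffun S -> K}) (om : {ffun S * S -> K}) : Prop :=
  is_dist om /\
  (forall s, \sum_(t : S) om (s, t) = mu s) /\
  (forall t, \sum_(s : S) om (s, t) = nu t).

(* an LMC is given by tau : S -> D(S) and ell : S -> L *)
Definition is_LMC (tau : S -> {ffun S -> K}) : Prop := forall s, is_dist (tau s).

Definition equivalence_set (Rl : {set S * S}) : Prop :=
  (forall s, (s, s) \in Rl) /\
  (forall s t, (s, t) \in Rl -> (t, s) \in Rl) /\
  (forall s t u, (s, t) \in Rl -> (t, u) \in Rl -> (s, u) \in Rl).

Definition bisimulation (tau : S -> {ffun S -> K}) (ell : S -> L)
  (Rl : {set S * S}) : Prop :=
  equivalence_set Rl /\
  forall s t, (s, t) \in Rl ->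
    ell s = ell t /\
    exists om, coupling (tau s) (tau t) om /\ support om \subset Rl.

Definition bisimilar (tau : S -> {ffun S -> K}) (ell : S -> L) (s t : S) : Prop :=
  exists Rl, bisimulation tau ell Rl /\ (s, t) \in Rl.

Definition S2_Delta : {set S * S} := [set x | x.1 == x.2].
Definition S2_1 (ell : S -> L) : {set S * S} := [set x | ell x.1 != ell x.2].
Definition S2_0q (ell : S -> L) : {set S * S} := ~: (S2_Delta :|: S2_1 ell).

Definition policy (tau : S -> {ffun S -> K}) (ell : S -> L)
  (P : S * S -> {ffun S * S -> K}) : Prop :=
  forall x : S * S,
    (x \notin S2_1 ell -> coupling (tau x.1) (tau x.2) (P x)) /\
    (x \in S2_1 ell -> P x = point_mass x).

Definition Pstep (P : S * S -> {ffun S * S -> K}) : rel (S * S) :=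
  fun x y => 0 < P x y.

Definition path_to (P : S * S -> {ffun S * S -> K}) (x : S * S) (p : seq (S * S))
  (A : {set S * S}) : Prop :=
  path (Pstep P) x p /\ last x p \in A.

Definition maximal_support_policy (tau : S -> {ffun S -> K}) (ell : S -> L)
  (Rl : {set S * S}) (P : S * S -> {ffun S * S -> K}) : Prop :=
  forall s t, (s, t) \in Rl :&: S2_0q ell ->
    support (P (s, t)) = setX (support (tau s)) (support (tau t)) :&: Rl.

Definition supports (Rl : {set S * S}) (P : S * S -> {ffun S * S -> K})
  (x : S * S) (p : seq (S * S)) : Prop :=
  forall y, y \in x :: p -> y \in Rl /\ support (P y) \subset Rl.

Definition in_Filter (tau : S -> {ffun S -> K}) (ell : S -> L)
  (Rl : {set S * S}) (x : S * S) : Prop :=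
  x \in Rl /\
  exists P', policy tau ell P' /\
    exists p, path_to P' x p S2_Delta /\ supports Rl P' x p.

End LMC.

(* Main.v *)
Require Import Defs.
From HB Require Import structures.
From mathcomp Require Import all_boot all_order all_algebra.
Import Order.TTheory GRing.Theory Num.Theory.
Local Open Scope ring_scope.
Set Implicit Arguments. Unset Strict Implicit.

Section Aux.
Variables (K : realFieldType) (S : finType).

Lemma sum_if1 (f : S -> K) i : \sum_j (if i == j then f i else 0) = f i.
Proof.
rewrite (bigD1 i) //= eqxx big1 ?addr0 // => j.
by rewrite eq_sym => /negbTE ->.
Qed.

Lemma sum_if2 (f : S -> K) i : \sum_j (if j == i then f j else 0) = f i.
Proof.
rewrite (bigD1 i) //= eqxx big1 ?addr0 // => j /negbTE -> //.
Qed.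

Definition diagc (mu : {ffun S -> K}) : {ffun S * S -> K} :=
  [ffun xy => if xy.1 == xy.2 then mu xy.1 else 0].

Lemma diagc_coupling (mu : {ffun S -> K}) : is_dist mu -> coupling mu mu (diagc mu).
Proof.
move=> [H0 H1]; split; [split|split].
- by move=> [a b]; rewrite ffunE /=; case: ifP.
- rewrite (eq_bigr (fun p => diagc mu (p.1, p.2))); last by move=> [].
  rewrite -(pair_bigA _ (fun a b => diagc mu (a, b))) /=.
  rewrite -H1; apply: eq_bigr => i _.
  under eq_bigr => j _ do rewrite ffunE /=.
  exact: sum_if1.
- move=> s; under eq_bigr => j _ do rewrite ffunE /=.
  exact: sum_if1.
- move=> t; under eq_bigr => j _ do rewrite ffunE /=.
  exact: sum_if2.
Qed.

Lemma diagc_support (mu : {ffun S -> K}) : Defs.support (diagc mu) \subset S2_Delta S.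
Proof.
apply/subsetP => -[a b]; rewrite !inE ffunE /=.
by case: ifP => // _; rewrite eqxx.
Qed.

Lemma coupling_supp (mu nu : {ffun S -> K}) (om : {ffun S * S -> K}) (s t : S) :
  coupling mu nu om -> om (s, t) != 0 -> (mu s != 0) && (nu t != 0).
Proof.
move=> [[H0 _] [Hm Hn]] Hne.
have Hp : 0 < om (s, t) by rewrite lt0r Hne H0.
apply/andP; split.
- rewrite -Hm (bigD1 t) //=; apply/lt0r_neq0.
  apply: (lt_le_trans Hp); rewrite lerDl; apply: sumr_ge0 => ? _; exact: H0.
- rewrite -Hn (bigD1 s) //=; apply/lt0r_neq0.
  apply: (lt_le_trans Hp); rewrite lerDl; apply: sumr_ge0 => ? _; exact: H0.
Qed.
End Aux.

Theorem mainTheorem18 (K : realFieldType) (S L : finType)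
  (tau : S -> {ffun S -> K}) (ell : S -> L)
  (Rl : {set S * S}) (P : S * S -> {ffun S * S -> K}) :
  is_LMC tau ->
  bisimulation tau ell Rl ->
  S2_Delta S \subset Rl ->
  (forall s t, (s, t) \in Rl -> bisimilar tau ell s t) ->
  policy tau ell P ->
  maximal_support_policy tau ell Rl P ->
  forall x : S * S,
    in_Filter tau ell Rl x <->
    (x \in Rl /\ exists p : seq (S * S), path_to P x p (S2_Delta S)).
Proof.
move=> Hlmc [Heq Hbis] HD _ HP Hmax.
have H0q : forall y, y \in Rl -> y \notin S2_Delta S -> y \in Rl :&: S2_0q ell.
  move=> [a b] Hy Hd; rewrite !inE Hy /=.
  have [-> _] := Hbis _ _ Hy.
  by rewrite eqxx orbF; move: Hd; rewrite inE.
have HnS1 : forall y, y \in Rl -> y \notin S2_1 ell.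
  by move=> [a b] Hy; rewrite inE /=; have [-> _] := Hbis _ _ Hy; rewrite eqxx.
move=> x; split.
- move=> [Hx [P' [HP' [p [[Hpath Hlast] Hsup]]]]]; split => //.
  elim: p x Hx Hpath Hlast Hsup => [|z p IH] x Hx Hpath Hlast Hsup.
    by exists [::].
  case: (boolP (x \in S2_Delta S)) => Hd; first by exists [::].
  move: Hpath => /= /andP [Hxz Hpath].
  have [_ HsupP'] := Hsup x (mem_head _ _).
  have Hz : z \in Rl.
    apply: (subsetP HsupP'); rewrite inE; exact: lt0r_neq0.
  have [q [Hq Hql]] : exists q, path_to P z q (S2_Delta S).
    apply: IH => // y Hy; apply: Hsup; by rewrite inE Hy orbT.
  exists (z :: q); split => //=; rewrite Hq andbT.
  have Hm := Hmax x.1 x.2; rewrite -surjective_pairing in Hm.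
  have Hsupp := Hm (H0q _ Hx Hd).
  have [Hc _] := HP' x.
  have Hzin : z \in Defs.support (P x).
    rewrite Hsupp inE Hz andbT [z]surjective_pairing in_setX !inE.
    apply: (coupling_supp (Hc (HnS1 _ Hx))).
    rewrite -surjective_pairing; exact: lt0r_neq0.
  have [Hc2 _] := HP x.
  move: Hzin; rewrite inE /Pstep lt0r => ->.
  case: (Hc2 (HnS1 _ Hx)) => [[H0 _] _]; exact: H0.
- move=> [Hx [p [Hpath Hlast]]]; split => //.
  pose P' := fun y : S * S => if y \in S2_Delta S then diagc (tau y.1) else P y.
  exists P'; split.
    move=> y; split.
    + move=> Hy; rewrite /P'; case: ifP => Hd; last by case: (HP y) => H _; exact: H.
      move: Hd; rewrite inE => /eqP ->; exact: diagc_coupling.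
    + move=> Hy; rewrite /P'; case: ifP => Hd; last by case: (HP y) => _ H; exact: H.
      by move: Hy Hd; rewrite !inE => /negP Hn /eqP E; case: Hn; rewrite E.
  elim: p x Hx Hpath Hlast => [|z p IH] x Hx Hpath Hlast.
    exists [::]; split => // y; rewrite inE => /eqP ->; split => //.
    rewrite /P' Hlast; exact: subset_trans (diagc_support _) HD.
  case: (boolP (x \in S2_Delta S)) => Hd.
    exists [::]; split => // y; rewrite inE => /eqP ->; split => //.
    rewrite /P' Hd; exact: subset_trans (diagc_support _) HD.
  move: Hpath => /= /andP [Hxz Hpath].
  have Hm := Hmax x.1 x.2; rewrite -surjective_pairing in Hm.
  have Hsupp := Hm (H0q _ Hx Hd).
  have Hz : z \in Rl.
    have : z \in Defs.support (P x) by rewrite inE; exact: lt0r_neq0.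
    by rewrite Hsupp inE => /andP [].
  have [q [[Hq Hql] Hs]] := IH z Hz Hpath Hlast.
  exists (z :: q); split.
    split => //=; rewrite Hq andbT /Pstep /P' (negbTE Hd); exact: Hxz.
  move=> y; rewrite inE => /orP [/eqP ->|Hy]; last exact: Hs.
  split => //; rewrite /P' (negbTE Hd) Hsupp; exact: subsetIr.
Qed.
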